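(* Let $\mathbb F$ be a field and $G,F_1,\dots,F_m\in\mathbb F[x_1,\dots,x_n]$. If there is an RIPS certificate that $G\in\sqrt{\langle F_1,\dots,F_m\rangle}$, then there is a Hilbert-like RIPS certificate that $G\in\sqrt{\langle F_1,\dots,F_m\rangle}$.
   Context: RIPS certificate that $G\in\sqrt{\langle F_1,\dots,F_m\rangle}$: a rational function $C(\vec x,\vec y)$ in $\vec x$ and placeholder variables $y_1,\dots,y_m$, written $C=C'/D$ with $C',D$ relatively prime polynomials, such that (0) if $G$ is an invertible constant then $D$ is constant, and otherwise $D(\vec x,\vec F(\vec x))$ does not vanish identically on any irreducible component over $\overline{\mathbb F}$ of $V(F_1,\dots,F_m)$; (1) $C(\vec x,\vec0)=0$; (2) $C(\vec x,F_1(\vec x),\dots,F_m(\vec x))=G(\vec x)$. It is Hilbert-like if it has the form $\frac{1}{D(\vec x)}\sum_iy_iG_i(\vec x)$, i.e. the denominator does not involve the $y_i$ and the numerator is linear in the $y_i$. *)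

(* Defs.v *)
From HB Require Import structures.
From mathcomp Require Import all_boot all_order all_algebra.
From mathcomp Require Import mpoly.

Set Implicit Arguments.
Unset Strict Implicit.
Unset Printing Implicit Defensive.

Import Order.TTheory GRing.Theory.
Local Open Scope ring_scope.

Section RIPS.
Variables (F : fieldType) (n m : nat).

(* Polynomials in x_1..x_n, y_1..y_m live in {mpoly F[n + m]};
   x_i is the variable lshift m i, y_j is the variable rshift n j. *)
Definition xvar (i : 'I_n) : {mpoly F[n + m]} := 'X_(lshift m i).
Definition yvar (j : 'I_m) : {mpoly F[n + m]} := 'X_(rshift n j).

Definition liftx (p : {mpoly F[n]}) : {mpoly F[n + m]} :=
  p \mPo [tuple xvar i | i < n].

Definition subst_yF (Fs : 'I_m -> {mpoly F[n]}) (p : {mpoly F[n + m]})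
  : {mpoly F[n]} :=
  p \mPo [tuple match split i with inl a => 'X_a | inr b => Fs b end
         | i < n + m].

Definition subst_y0 (p : {mpoly F[n + m]}) : {mpoly F[n]} :=
  p \mPo [tuple match split i with inl a => 'X_a | inr _ => 0 end
         | i < n + m].

Definition rel_prime (p q : {mpoly F[n + m]}) : Prop :=
  forall d : {mpoly F[n + m]},
    (exists a, p = d * a) -> (exists b, q = d * b) -> d \is a GRing.unit.

Definition inv_const (G : {mpoly F[n]}) : Prop :=
  exists c : F, c != 0 /\ G = c%:MP.

End RIPS.

Section Zariski.
Variables (L : closedFieldType) (n : nat).

Definition pset := ('I_n -> L) -> Prop.

Definition zclosed (S : pset) : Prop :=
  exists P : {mpoly L[n]} -> Prop,
    forall z, S z <-> (forall p, P p -> p.@[z] = 0).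

Definition zirreducible (S : pset) : Prop :=
  [/\ zclosed S, exists z, S z &
      forall S1 S2 : pset, zclosed S1 -> zclosed S2 ->
        (forall z, S z -> S1 z \/ S2 z) ->
        (forall z, S z -> S1 z) \/ (forall z, S z -> S2 z)].

Definition irr_component (V Z : pset) : Prop :=
  [/\ zirreducible Z, (forall z, Z z -> V z) &
      forall Z' : pset, zirreducible Z' -> (forall z, Z' z -> V z) ->
        (forall z, Z z -> Z' z) -> forall z, Z' z -> Z z].

End Zariski.

Definition is_alg_closure (F : fieldType) (L : closedFieldType)
  (iota : {rmorphism F -> L}) : Prop :=
  forall x : L, exists p : {poly F}, p != 0 /\ root (map_poly iota p) x.

Section Cert.
Variables (F : fieldType) (L : closedFieldType) (iota : {rmorphism F -> L}).
Variables (n m : nat).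

Definition variety (Fs : 'I_m -> {mpoly F[n]}) : pset L n :=
  fun z => forall j, (map_mpoly iota (Fs j)).@[z] = 0.

(* (Cn, D) represents C = Cn / D, an RIPS certificate that
   G \in sqrt <F_1, ..., F_m>, irreducible components taken over L. *)
Definition RIPS_cert (G : {mpoly F[n]}) (Fs : 'I_m -> {mpoly F[n]})
  (Cn D : {mpoly F[n + m]}) : Prop :=
  [/\ D != 0, rel_prime Cn D,
      (inv_const G -> exists d : F, D = d%:MP) /\
      (~ inv_const G ->
         forall Z, irr_component (variety Fs) Z ->
           exists z, Z z /\ (map_mpoly iota (subst_yF Fs D)).@[z] != 0),
      subst_y0 D != 0 /\ subst_y0 Cn = 0 &
      subst_yF Fs D != 0 /\ subst_yF Fs Cn = G * subst_yF Fs D].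

(* C = Cn / D has the form (1 / D0(x)) * sum_i y_i G_i(x). *)
Definition hilbert_like (Cn D : {mpoly F[n + m]}) : Prop :=
  exists (D0 : {mpoly F[n]}) (Gs : 'I_m -> {mpoly F[n]}),
    D0 != 0 /\
    Cn * @liftx F n m D0 = D * \sum_(i < m) @yvar F n m i * @liftx F n m (Gs i).

End Cert.

(* Main.v *)
Require Import Defs.
From HB Require Import structures.
From mathcomp Require Import all_boot all_order all_algebra.
From mathcomp Require Import mpoly.
From mathcomp Require Import ring zify.
From Stdlib Require Import Classical.
Set Implicit Arguments.
Unset Strict Implicit.
Local Open Scope ring_scope.
Import GRing.Theory.

Section Ext.
Variables (F : fieldType) (k : nat) (S : ringType).
Lemma mpoly_ext (f g : {mpoly F[k]} -> S) :
  (forall p q, f (p + q) = f p + f q) -> (forall p q, f (p * q) = f p * f q) ->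
  (forall p q, g (p + q) = g p + g q) -> (forall p q, g (p * q) = g p * g q) ->
  (forall c, f c%:MP = g c%:MP) -> (forall i, f 'X_i = g 'X_i) ->
  forall p, f p = g p.
Proof.
move=> fD fM gD gM eC eX.
have e1 : f 1 = g 1 by rewrite -mpolyC1 eC.
have eXn : forall i e, f ('X_i ^+ e) = g ('X_i ^+ e).
  move=> i; elim=> [|e IH]; first by rewrite !expr0.
  by rewrite exprS fM gM IH eX.
have eM : forall mm, f 'X_[mm] = g 'X_[mm].
  move=> mm; rewrite mpolyXE_id; elim: (index_enum _) => [|j r IH].
    by rewrite !big_nil.
  by rewrite !big_cons fM gM IH eXn.
elim/mpolyind => [|c mm p _ _ IH]; first by rewrite -mpolyC0 eC.
by rewrite fD gD IH -mul_mpolyC fM gM eC eM.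
Qed.

Lemma compX l (f : 'I_k -> {mpoly F[l]}) i : 'X_i \mPo [tuple f j | j < k] = f i.
Proof. by rewrite comp_mpolyXU -tnth_nth tnth_mktuple. Qed.
Lemma comp_sum l (lq : k.-tuple {mpoly F[l]}) (I : Type) (r : seq I) (P : pred I)
  (f : I -> {mpoly F[k]}) :
  (\sum_(i <- r | P i) f i) \mPo lq = \sum_(i <- r | P i) (f i \mPo lq).
Proof. exact: (big_morph _ (comp_mpolyD lq) (comp_mpoly0 lq)). Qed.
Lemma compM l (lq : k.-tuple {mpoly F[l]}) (p q : {mpoly F[k]}) :
  (p * q) \mPo lq = (p \mPo lq) * (q \mPo lq).
Proof. exact: rmorphM. Qed.
End Ext.

Section Main.
Variables (F : fieldType) (n m : nat) (Fs : 'I_m -> {mpoly F[n]}).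

Let sl (a : 'I_n) : split (lshift m a) = inl a := unsplitK (inl a).
Let sr (b : 'I_m) : split (rshift n b) = inr b := unsplitK (inr b).

Lemma comp_liftx (f : 'I_(n + m) -> {mpoly F[n]}) :
  (forall a, f (lshift m a) = 'X_a) ->
  forall q, @liftx F n m q \mPo [tuple f i | i < n + m] = q.
Proof.
move=> hf; apply: (@mpoly_ext _ _ _ (fun q => @liftx F n m q \mPo [tuple f i | i < n + m]) (id)).
- by move=> p q; rewrite /liftx !raddfD.
- by move=> p q; rewrite /liftx !rmorphM.
- by [].
- by [].
- by move=> c; rewrite /liftx !comp_mpolyC.
- by move=> a; rewrite /liftx compX /xvar compX hf.
Qed.

Lemma s0_liftx q : @subst_y0 F n m (@liftx F n m q) = q.
Proof. by rewrite /subst_y0 comp_liftx // => a; rewrite sl. Qed.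

Lemma sF_liftx q : subst_yF Fs (@liftx F n m q) = q.
Proof. by rewrite /subst_yF comp_liftx // => a; rewrite sl. Qed.

Definition ei (i : 'I_m) (p : {mpoly F[n + m]}) : {mpoly F[n]} :=
  p \mPo [tuple match split j with inl a => 'X_a | inr b => (b == i)%:R end
         | j < n + m].

Lemma ei_liftx i q : ei i (@liftx F n m q) = q.
Proof. by rewrite /ei comp_liftx // => a; rewrite sl. Qed.

Lemma eiM i p q : ei i (p * q) = ei i p * ei i q.
Proof. by rewrite /ei compM. Qed.

Lemma ei_Cn i (Gs : 'I_m -> {mpoly F[n]}) :
  ei i (\sum_j @yvar F n m j * @liftx F n m (Gs j)) = Gs i.
Proof.
rewrite /ei comp_sum (bigD1 i) //= big1 ?addr0.
  rewrite compM /yvar compX sr eqxx mul1r comp_liftx // => a.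
  by rewrite sl.
by move=> j /negbTE nj; rewrite compM /yvar compX sr nj mul0r.
Qed.

Lemma liftx_neq0 q : q != 0 -> @liftx F n m q != 0.
Proof.
move=> nq; apply: contra nq => /eqP e.
by rewrite -(s0_liftx q) e /subst_y0 raddf0.
Qed.

Definition hh (i : 'I_(n + m)) : {poly {mpoly F[n + m]}} :=
  if split i is inr _ then ('X_i)%:P * 'X else ('X_i)%:P.

Definition rho (p : {mpoly F[n + m]}) : {poly {mpoly F[n + m]}} :=
  mmap (polyC \o (@mpolyC (n + m) F))%FUN hh p.
Lemma rhoM p q : rho (p * q) = rho p * rho q.
Proof. by rewrite /rho rmorphM. Qed.
Lemma rhoD p q : rho (p + q) = rho p + rho q.
Proof. by rewrite /rho raddfD. Qed.
Lemma rhoC c : rho c%:MP = (c%:MP)%:P.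
Proof. by rewrite /rho mmapC. Qed.
Lemma rhoX i : rho 'X_i = hh i.
Proof. by rewrite /rho mmapX mmap1U. Qed.

Lemma rho_liftx q : rho (@liftx F n m q) = (@liftx F n m q)%:P.
Proof.
apply: (@mpoly_ext _ _ _ (fun q => rho (@liftx F n m q))
                  (fun q => (@liftx F n m q)%:P)).
- by move=> p r; rewrite /liftx raddfD rhoD.
- by move=> p r; rewrite /liftx rmorphM rhoM.
- by move=> p r; rewrite /liftx raddfD polyCD.
- by move=> p r; rewrite /liftx rmorphM polyCM.
- by move=> c; rewrite /liftx comp_mpolyC rhoC.
- by move=> a; rewrite /liftx compX /xvar rhoX /hh sl.
Qed.

Lemma rho1 p : (rho p).[1] = p.
Proof.
apply: (@mpoly_ext _ _ _ (fun p => (rho p).[1]) (id)).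
- by move=> a b; rewrite rhoD hornerD.
- by move=> a b; rewrite rhoM hornerM.
- by [].
- by [].
- by move=> c; rewrite rhoC hornerC.
- move=> i; rewrite rhoX /hh; case: (split i) => _.
    by rewrite hornerC.
  by rewrite hornerMX hornerC mulr1.
Qed.

Lemma rho0 p : (rho p).[0] = @liftx F n m (@subst_y0 F n m p).
Proof.
apply: (@mpoly_ext _ _ _ (fun p => (rho p).[0])
                  (fun p => @liftx F n m (@subst_y0 F n m p))).
- by move=> a b; rewrite rhoD hornerD.
- by move=> a b; rewrite rhoM hornerM.
- by move=> a b; rewrite /liftx /subst_y0 !raddfD.
- by move=> a b; rewrite /liftx /subst_y0 !rmorphM.
- by move=> c; rewrite rhoC hornerC /liftx /subst_y0 !comp_mpolyC.
- move=> i; rewrite rhoX /hh /subst_y0 compX -[i]splitK.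
  case: (split i) => [a|b]; rewrite unsplitK.
    by rewrite hornerC /liftx compX /xvar.
  by rewrite hornerMX mulr0 /liftx raddf0.
Qed.

Lemma xonly d a q : d * a = @liftx F n m q -> q != 0 ->
  d = @liftx F n m (@subst_y0 F n m d).
Proof.
move=> E nq.
have nl := @liftx_neq0 q nq.
have E' : rho d * rho a = (@liftx F n m q)%:P by rewrite -rhoM E rho_liftx.
have : size (rho d * rho a) == 1%N by rewrite E' size_polyC nl.
rewrite size_mul_eq1 => /andP [/eqP sd _].
have cd := size1_polyC (eq_leq sd).
by rewrite -{1}[d]rho1 -rho0 cd !hornerC.
Qed.

Definition inI (q : {mpoly F[n]}) :=
  exists Gs : 'I_m -> {mpoly F[n]}, q = \sum_i Fs i * Gs i.

Lemma inI0 : inI 0.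
Proof. by exists (fun _ => 0); rewrite big1 // => i _; rewrite mulr0. Qed.

Lemma inID p q : inI p -> inI q -> inI (p + q).
Proof.
move=> [G1 ->] [G2 ->]; exists (fun i => G1 i + G2 i).
by rewrite -big_split; apply: eq_bigr => i _; rewrite mulrDr.
Qed.

Lemma inIM c q : inI q -> inI (c * q).
Proof.
move=> [G1 ->]; exists (fun i => c * G1 i).
by rewrite mulr_sumr; apply: eq_bigr => i _; rewrite mulrCA.
Qed.

Lemma ideal p : inI (subst_yF Fs p - @subst_y0 F n m p).
Proof.
pose P p := inI (subst_yF Fs p - @subst_y0 F n m p).
have PD : forall p q, P p -> P q -> P (p + q).
  move=> a b ha hb; rewrite /P /subst_yF /subst_y0 !raddfD.
  by rewrite addrACA; apply: inID.
have PM : forall p q, P p -> P q -> P (p * q).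
  move=> a b ha hb; rewrite /P /subst_yF /subst_y0 !rmorphM.
  have e : forall x y z w : {mpoly F[n]}, x * y - z * w = x * (y - w) + w * (x - z).
    by move=> x y z w; ring.
  rewrite e.
  by apply: inID; apply: inIM.
have PC : forall c, P c%:MP.
  by move=> c; rewrite /P /subst_yF /subst_y0 !comp_mpolyC subrr; apply: inI0.
have PX : forall i, P 'X_i.
  move=> i; rewrite /P /subst_yF /subst_y0 !compX -[i]splitK.
  case: (split i) => [a|b]; rewrite unsplitK.
    by rewrite subrr; apply: inI0.
  exists (fun j => (j == b)%:R); rewrite subr0 (bigD1 b) //= eqxx mulr1.
  by rewrite big1 ?addr0 // => j /negbTE ->; rewrite mulr0.
have P1 : P 1 by have := PC 1; rewrite mpolyC1.
have PXn : forall i e, P ('X_i ^+ e).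
  by move=> i; elim=> [|e IH]; [rewrite expr0 | rewrite exprS; apply: PM].
have PMo : forall mm, P 'X_[mm].
  move=> mm; rewrite mpolyXE_id; elim: (index_enum _) => [|j r IH].
    by rewrite big_nil.
  by rewrite big_cons; apply: PM.
change (P p); elim/mpolyind: p => [|c mm p _ _ IH]; first by have := PC 0; rewrite mpolyC0.
by apply: PD => //; rewrite -mul_mpolyC; apply: PM.
Qed.

Lemma unit_nonconst (d : {mpoly F[n]}) : d != 0 -> d \isn't a GRing.unit ->
  (2 <= msize d)%N.
Proof.
move=> nd nu; rewrite leqNgt; apply/negP => hs.
have cd := msize1_polyC (hs : (msize d <= 1)%N).
move: nu nd; rewrite cd mpolyC_eq0 => /negP nu nc; apply: nu.
apply/unitrP; exists ((d@_0)^-1)%:MP.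
by rewrite -!mpolyCM mulVf // mulfV.
Qed.

End Main.

Theorem lemmaB9 (F : fieldType) (L : closedFieldType)
  (iota : {rmorphism F -> L}) (n m : nat)
  (G : {mpoly F[n]}) (Fs : 'I_m -> {mpoly F[n]}) :
  is_alg_closure iota ->
  (exists Cn D : {mpoly F[n + m]}, RIPS_cert iota G Fs Cn D) ->
  exists Cn D : {mpoly F[n + m]},
    RIPS_cert iota G Fs Cn D /\ hilbert_like Cn D.
Proof.
move=> _ [Cn0 [D [Dn0 _ [H0a H0b] [s0D s0C] [sFD sFC]]]].
pose good (D0 : {mpoly F[n]}) (Gs : 'I_m -> {mpoly F[n]}) :=
  [/\ D0 != 0, (inv_const G -> exists c, D0 = c%:MP),
      (~ inv_const G -> forall Z, irr_component (variety iota Fs) Z ->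
           exists z, Z z /\ (map_mpoly iota D0).@[z] != 0)
    & G * D0 = \sum_i Fs i * Gs i].
pose Cn (Gs : 'I_m -> {mpoly F[n]}) :=
  \sum_i @yvar F n m i * @liftx F n m (Gs i).
have sr : forall b : 'I_m, split (rshift n b) = inr b := fun b => unsplitK (inr b).
have s0y : forall i, @subst_y0 F n m (@yvar F n m i) = 0.
  by move=> i; rewrite /subst_y0 /yvar compX sr.
have sFy : forall i, subst_yF Fs (@yvar F n m i) = Fs i.
  by move=> i; rewrite /subst_yF /yvar compX sr.
have eiy : forall i j, ei i (@yvar F n m j) = (j == i)%:R.
  by move=> i j; rewrite /ei /yvar compX sr.
have build : forall D0 Gs, good D0 Gs -> rel_prime (Cn Gs) (@liftx F n m D0) ->
    exists Cn D : {mpoly F[n + m]},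
    RIPS_cert iota G Fs Cn D /\ hilbert_like Cn D.
  move=> D0 Gs [nD0 ga gb gc] rp; exists (Cn Gs), (@liftx F n m D0); split.
    split.
    - exact: liftx_neq0.
    - exact: rp.
    - split.
        move=> /ga [c ->]; exists c; by rewrite /liftx comp_mpolyC.
      by rewrite sF_liftx.
    - rewrite s0_liftx; split => //.
      rewrite /Cn /subst_y0 comp_sum big1 // => i _.
      by rewrite compM /yvar compX sr mul0r.
    - rewrite sF_liftx; split => //.
      rewrite gc /Cn /subst_yF comp_sum; apply: eq_bigr => i _.
      by rewrite compM /yvar compX sr comp_liftx // => c; rewrite (unsplitK (inl c)).
  by exists D0, Gs; split => //; rewrite mulrC.
have reduce : forall D0 Gs, good D0 Gs -> ~ rel_prime (Cn Gs) (@liftx F n m D0) ->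
    exists D1 Gs1, good D1 Gs1 /\ (msize D1 < msize D0)%N.
  move=> D0 Gs [nD0 ga gb gc] nrp.
  move: nrp; rewrite /rel_prime => nrp.
  have [d hd] := not_all_ex_not _ _ nrp.
  have [[a Ea] hd2] := imply_to_and _ _ hd.
  have [[b Eb] nu] := imply_to_and _ _ hd2.
  set d' := @subst_y0 F n m d.
  have ed : d = @liftx F n m d' by apply: (xonly (esym Eb)).
  set b' := @subst_y0 F n m b.
  have eD0 : D0 = d' * b'.
    by rewrite -(@s0_liftx F n m D0) Eb /subst_y0 compM.
  have eG : forall i, Gs i = d' * ei i a.
    move=> i; have := congr1 (ei i) Ea.
    rewrite eiM ei_Cn => ->; congr (_ * _).
    by rewrite {1}ed ei_liftx.
  have nd' : d' != 0 by apply: contraNneq nD0 => e; rewrite eD0 e mul0r.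
  have nb' : b' != 0 by apply: contraNneq nD0 => e; rewrite eD0 e mulr0.
  have nu' : d' \isn't a GRing.unit.
    apply/negP => u; apply: nu; rewrite ed /liftx.
    exact: (rmorph_unit _ u).
  have s2 := unit_nonconst nd' nu'.
  have sz : (msize b' < msize D0)%N.
    have hb : (0 < msize b')%N by rewrite lt0n msize_poly_eq0.
    have key : forall x y : nat, (1 < x)%N -> (y < (x + y).-1)%N by move=> x y; lia.
    rewrite eD0 msizeM //; exact: key.
  exists b', (fun i => ei i a).
  split; last exact: sz.
  split.
  - exact: nb'.
  - move=> /ga [c ec]; exists (b'@_0); apply: msize1_polyC.
    have key : forall x y : nat, (x < y)%N -> (y <= 1)%N -> (x <= 1)%N by move=> x y; lia.
    apply: (key _ _ sz); rewrite ec msizeC; by case: (c != 0).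
  - move=> ni Z hZ; have [z [Zz hz]] := gb ni Z hZ; exists z; split; first exact: Zz.
    apply: contra hz => /eqP e.
    have mM : map_mpoly iota (d' * b') = map_mpoly iota d' * map_mpoly iota b'
      by exact: rmorphM.
    by rewrite eD0 mM mevalM e mulr0.
  - apply: (mulfI nd'); rewrite mulrCA -eD0 gc mulr_sumr.
    by apply: eq_bigr => i _; rewrite eG mulrCA.
have [Gs0 eGs0] := ideal Fs Cn0.
have g0 : good (subst_yF Fs D) Gs0.
  split => //.
  - by move=> /H0a [c ->]; exists c; rewrite /subst_yF comp_mpolyC.
  - by rewrite -sFC -eGs0 s0C subr0.
suff : forall k D0 Gs, (msize D0 <= k)%N -> good D0 Gs ->
    exists Cn D : {mpoly F[n + m]},
    RIPS_cert iota G Fs Cn D /\ hilbert_like Cn D.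
  by move=> /(_ _ _ _ (leqnn _) g0).
elim=> [|k IH] D0 Gs hs g.
  by case: g => nD0 _ _ _; move: hs; rewrite leqn0 msize_poly_eq0 (negbTE nD0).
have [rp | nrp] := classic (rel_prime (Cn Gs) (@liftx F n m D0)).
  exact: build rp.
have [D1 [Gs1 [g1 lt1]]] := reduce D0 Gs g nrp.
apply: (IH D1 Gs1) => //; lia.
Qed.
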